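(* For every zero-error variable-length $(k,N)$ network code for the network described in the context, the stopping time $N$ satisfies $$\Pr(N=n)\le \left(\tfrac{3}{8}\right)^k|\mathcal Z|^{2n}\quad\text{for every positive integer } n.$$
   Context: Network: source nodes $s_1,s_2,s_3$ and a terminal $t$, with edges $(s_3,s_1),(s_3,s_2),(s_1,t),(s_2,t)$. Source $s_j$ observes $\mathbf X_j=(\mathbf X_j(1),\dots,\mathbf X_j(k))\in\{0,1\}^k$; all $3k$ bits are i.i.d. uniform on $\{0,1\}$. The edges $(s_3,s_1),(s_3,s_2)$ deliver $\mathbf X_3$ to $s_1$ and $s_2$. $\mathcal Z$ is a finite alphabet with $|\mathcal Z|\ge 2$ and $\mathcal Z^*$ the set of finite sequences over $\mathcal Z$. A variable-length $(k,N)$ network code consists of: encoding maps $\phi_1,\phi_2:\{0,1\}^k\times\{0,1\}^k\to\mathcal Z^*$, giving the sequences $\mathbf Z_1=\phi_1(\mathbf X_1,\mathbf X_3)$ (sent on $(s_1,t)$) and $\mathbf Z_2=\phi_2(\mathbf X_2,\mathbf X_3)$ (sent on $(s_2,t)$), with $\mathbf Z_j(m)$ the $m$-th symbol; a random variable $N$ with values in the positive integers that is a stopping time for the sequence $(\mathbf Z_1(1),\mathbf Z_2(1)),(\mathbf Z_1(2),\mathbf Z_2(2)),\dots$ (the event $\{N=n\}$ is determined by $(\mathbf Z_1(m),\mathbf Z_2(m))_{m\le n}$); and a decoder $\psi$ giving the estimate $\hat{\boldsymbol\Sigma}=\psi(\mathbf Z_1^N,\mathbf Z_2^N)\in\{0,1,2,3\}^k$,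 where $\mathbf Z_j^N=(\mathbf Z_j(1),\dots,\mathbf Z_j(N))$. The target is the componentwise integer sum $\boldsymbol\Sigma=\mathbf X_1+\mathbf X_2+\mathbf X_3\in\{0,1,2,3\}^k$. The code is zero-error if $\Pr(\hat{\boldsymbol\Sigma}\neq\boldsymbol\Sigma)=0$. *)

(* Defs.v *)
From HB Require Import structures.
From mathcomp Require Import all_boot all_order all_algebra.
Set Implicit Arguments. Unset Strict Implicit. Unset Printing Implicit Defensive.
Import Order.TTheory GRing.Theory Num.Theory.

Definition bits (k : nat) := {ffun 'I_k -> bool}.

(* Sample space: outcomes (x1, x2, x3); all 3k bits i.i.d. uniform, i.e. the
   uniform distribution on this finite set. *)
Definition outcome (k : nat) := (bits k * bits k * bits k)%type.

Definition Pr (k : nat) (E : pred (outcome k)) : rat :=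
  (#|[set w : outcome k | E w]|%:R / #|{: outcome k}|%:R)%R.

Definition target (k : nat) (w : outcome k) : {ffun 'I_k -> nat} :=
  [ffun i => (w.1.1 i : nat) + (w.1.2 i : nat) + (w.2 i : nat)].

Record vl_code (k : nat) (Z : finType) := VLCode {
  phi1 : bits k -> bits k -> seq Z;          (* Z1 = phi1(X1, X3) *)
  phi2 : bits k -> bits k -> seq Z;          (* Z2 = phi2(X2, X3) *)
  stopN : outcome k -> nat;
  psi : seq Z -> seq Z -> {ffun 'I_k -> 'I_4}
}.

Definition Z1 k Z (c : vl_code k Z) (w : outcome k) : seq Z := phi1 c w.1.1 w.2.
Definition Z2 k Z (c : vl_code k Z) (w : outcome k) : seq Z := phi2 c w.1.2 w.2.

Definition valid_code k Z (c : vl_code k Z) : Prop :=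
  [/\ forall w, 0 < stopN c w,
      forall w, stopN c w <= size (Z1 c w) /\ stopN c w <= size (Z2 c w)
    & forall (n : nat) (w w' : outcome k),
        take n (Z1 c w) = take n (Z1 c w') ->
        take n (Z2 c w) = take n (Z2 c w') ->
        (stopN c w == n) = (stopN c w' == n)].

Definition estimate k Z (c : vl_code k Z) (w : outcome k) : {ffun 'I_k -> 'I_4} :=
  psi c (take (stopN c w) (Z1 c w)) (take (stopN c w) (Z2 c w)).

Definition zero_error k Z (c : vl_code k Z) : Prop :=
  Pr [pred w | [ffun i => val (estimate c w i)] != target w] = 0%R.

(* Main.v *)
Require Import Defs.
From HB Require Import structures.
From mathcomp Require Import all_boot all_order all_algebra.
Import Order.TTheory GRing.Theory Num.Theory.

Definition rk (a b c : bool) : nat :=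
  if a != b then (if c == b then 0 else 1) else 2.

Lemma rk_lt a b c : (rk a b c < 3)%N.
Proof. by case: a; case: b; case: c. Qed.

Lemma rk_inj (a b c a' b' c' : bool) :
  (a + b + c = a' + b' + c')%N -> rk a b c = rk a' b' c' ->
  [/\ a = a', b = b' & c = c'].
Proof. by case: a; case: b; case: c; case: a'; case: b'; case: c'. Qed.

Theorem lemma2 (k : nat) (Z : finType) (hZ : (2 <= #|Z|)%N)
  (c : vl_code k Z) (hc : valid_code c) (hz : zero_error c) (n : nat) (hn : (0 < n)%N) :
  (Pr [pred w | stopN c w == n] <= (3%:R / 8%:R) ^+ k * (#|Z|%:R) ^+ (2 * n) :> rat)%R.
Proof.
case: hc => _ hsz _.
have [z0 _] : exists z0 : Z, true.
  by move: hZ; case: (pickP (@predT Z)) => [z _|/eq_card0 ->] //; exists z.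
have hcard : #|{: outcome k}| = (8 ^ k)%N.
  by rewrite !card_prod !card_ffun !card_bool !card_ord -!expnMn.
have hok : forall w, [ffun i => val (estimate c w i)] = target w.
  move=> w; apply/eqP; apply: contraT => hne.
  move: hz; rewrite /zero_error /Pr hcard.
  move/eqP; rewrite mulf_eq0 invr_eq0 !pnatr_eq0 expn_eq0 /= orbF.
  rewrite cards_eq0 => /eqP/setP/(_ w); rewrite !inE hne //.
pose S := [set w : outcome k | stopN c w == n].
pose tp (s : seq Z) : n.-tuple Z := insubd (nseq_tuple n z0) s.
pose f (w : outcome k) := (tp (take n (Z1 c w)), tp (take n (Z2 c w)),
   [ffun i : 'I_k => (inord (rk (w.1.1 i) (w.1.2 i) (w.2 i)) : 'I_3)]).
have hinj : {in S &, injective f}.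
  move=> w w'; rewrite !inE => /eqP hw /eqP hw' [e1 e2 e3].
  have tpK : forall w0, stopN c w0 = n ->
     val (tp (take n (Z1 c w0))) = take n (Z1 c w0) /\
     val (tp (take n (Z2 c w0))) = take n (Z2 c w0).
    move=> w0 h0; have [h1 h2] := hsz w0; rewrite h0 in h1 h2.
    by split; rewrite /tp insubdK // unfold_in /= size_takel.
  have [a1 a2] := tpK w hw; have [b1 b2] := tpK w' hw'.
  have he : estimate c w = estimate c w'.
    by rewrite /estimate hw hw' -a1 -a2 -b1 -b2 e1 e2.
  have ht : target w = target w' by rewrite -!hok he.
  have hb : forall i, [/\ w.1.1 i = w'.1.1 i, w.1.2 i = w'.1.2 i & w.2 i = w'.2 i].
    move=> i; apply: rk_inj.
      by move/ffunP: ht => /(_ i); rewrite !ffunE.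
    move/ffunP: e3 => /(_ i); rewrite !ffunE => /(congr1 val).
    by rewrite /= !inordK // rk_lt.
  case: w w' {hw hw' e1 e2 e3 a1 a2 b1 b2 he ht tpK} hb => [[x1 x2] x3] [[y1 y2] y3] /= hb.
  congr (_, _, _); apply/ffunP => i; by case: (hb i).
have hS : (#|S| <= 3 ^ k * #|Z| ^ (2 * n))%N.
  rewrite -(card_in_imset hinj).
  apply: leq_trans (max_card _) _.
  rewrite !card_prod !card_tuple card_ffun !card_ord mulnC -expnD addnn -mul2n.
  by [].
rewrite /Pr hcard.
have -> : #|[set w : outcome k | [pred w | stopN c w == n] w]| = #|S|.
  by apply: eq_card => w; rewrite !inE.
rewrite expr_div_n -natrX -!natrX mulrAC ler_pdivrMr ?ltr0n ?expn_gt0 //.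
rewrite divfK ?pnatr_eq0 ?expn_eq0 // -natrM ler_nat.
by [].
Qed.
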